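(* Let $r\geq 3$. If a $2$-connected $r$-graph $G$ has a $2$-vertex-cut, then either $G$ has a non-trivial tight edge-cut or the underlying simple graph $G_s$ is a circuit of length $4$.
   Context: Graphs are finite, may have parallel edges but no loops. $\partial_G(X)$ is the set of edges with exactly one end in $X\subseteq V(G)$. An $r$-graph is an $r$-regular graph $G$ with $|\partial_G(X)|\geq r$ for every $X\subseteq V(G)$ of odd cardinality. An edge-cut $\partial_G(X)$ of an $r$-graph $G$ is a non-trivial tight edge-cut if $|X|$ is odd, $|\partial_G(X)|=r$, and $|X|>1$ and $|V(G)\setminus X|>1$. $G_s$ is the underlying simple graph of $G$. A $2$-vertex-cut is a set of $2$ vertices whose removal increases the number of components. *)

(* Defs.v *)
(* A loopless multigraph on a finite vertex type V is encoded
   by its multiplicity function m : V -> V -> nat (m u v = number of parallel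
   edges between u and v), symmetric and zero on the diagonal. *)
From mathcomp Require Import all_boot.
Set Implicit Arguments. Unset Strict Implicit. Unset Printing Implicit Defensive.

Section Graphs.
Variable V : finType.
Implicit Types (m : V -> V -> nat) (X S : {set V}).

Definition multigraph m := (forall u v, m u v = m v u) /\ (forall v, m v v = 0).

Definition deg m v := \sum_(u : V) m v u.

Definition cut m X := \sum_(u in X) \sum_(v in ~: X) m u v.

Definition r_graph (r : nat) m :=
  (forall v, deg m v = r) /\ (forall X, odd #|X| -> r <= cut m X).

Definition adj m : rel V := fun u v => 0 < m u v.

Definition restr m S : rel V := fun u v => [&& u \in S, v \in S & adj m u v].

Definition connected_on m S :=
  forall x y, x \in S -> y \in S -> connect (restr m S) x y.

Definition ncomp m S :=
  #|[set [set y in S | connect (restr m S) x y] | x in S]|.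

Definition two_connected m :=
  [/\ 3 <= #|V|, connected_on m [set: V] &
      forall v, connected_on m (~: [set v])].

Definition two_vertex_cut m x y :=
  x != y /\ ncomp m [set: V] < ncomp m (~: [set x; y]).

Definition nontrivial_tight_cut (r : nat) m X :=
  [/\ odd #|X|, cut m X = r, 1 < #|X| & 1 < #|~: X|].

Definition simple_C4 m :=
  exists a b c d : V,
    [/\ uniq [:: a; b; c; d], (forall v, v \in [:: a; b; c; d]) &
        forall u v, adj m u v =
          ((u, v) \in [:: (a, b); (b, a); (b, c); (c, b);
                          (c, d); (d, c); (d, a); (a, d)])].
End Graphs.

(* Main.v *)
Require Import Defs.
From mathcomp Require Import all_boot.
From mathcomp Require Import zify.
Set Implicit Arguments. Unset Strict Implicit. Unset Printing Implicit Defensive.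

Section Split.
Variable V : finType.
Variable m : V -> V -> nat.
Hypothesis msym : forall u v, m u v = m v u.
Variables x y : V.
Variable A : {set V}.
Hypothesis xy : x != y.
Hypothesis xA : x \notin A.
Hypothesis yA : y \notin A.
Let B := ~: (x |: (y |: A)).
Hypothesis noedge : forall u v, u \in A -> v \in B -> m u v = 0.

Definition sm z (S : {set V}) := \sum_(v in S) m z v.

Lemma sumCA f : \sum_(v in ~: A) f v = f x + f y + \sum_(v in B) f v.
Proof.
rewrite (bigD1 x) ?inE ?xA //= (bigD1 y) /=; last by rewrite !inE (negbTE yA) eq_sym (negbTE xy).
rewrite addnA; congr (_ + _); apply: eq_bigl => v; rewrite !inE.
by case: (v \in A); case: (v == x); case: (v == y).
Qed.

Lemma sumCxA f : \sum_(v in ~: (x |: A)) f v = f y + \sum_(v in B) f v.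
Proof.
rewrite (bigD1 y) /=; last by rewrite !inE (negbTE yA) eq_sym (negbTE xy).
congr (_ + _); apply: eq_bigl => v; rewrite !inE.
by case: (v \in A); case: (v == x); case: (v == y).
Qed.

Lemma sumCyA f : \sum_(v in ~: (y |: A)) f v = f x + \sum_(v in B) f v.
Proof.
rewrite (bigD1 x) /=; last by rewrite !inE (negbTE xA) (negbTE xy).
congr (_ + _); apply: eq_bigl => v; rewrite !inE.
by case: (v \in A); case: (v == x); case: (v == y).
Qed.

Lemma sumT f : \sum_v f v = \sum_(v in A) f v + \sum_(v in ~: A) f v.
Proof.
rewrite (bigID (mem A)) /=; congr (_ + _); apply: eq_bigl => v; by rewrite ?inE.
Qed.

Lemma inner0 u : u \in A -> \sum_(v in B) m u v = 0.
Proof. by move=> uA; rewrite big1 // => v vB; apply: noedge. Qed.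

Lemma cutA : cut m A = sm x A + sm y A.
Proof.
rewrite /cut /sm.
rewrite (eq_bigr (fun u => m u x + m u y)); last first.
  by move=> u uA; rewrite sumCA inner0 // addn0.
by rewrite big_split /=; congr (_ + _); apply: eq_bigr => u _; rewrite msym.
Qed.

Lemma cutxA : cut m (x |: A) = m x y + sm x B + sm y A.
Proof.
rewrite /cut /sm big_setU1 //= sumCxA; congr (_ + _).
by apply: eq_bigr => u uA; rewrite sumCxA inner0 // addn0 msym.
Qed.

Lemma cutyA : cut m (y |: A) = m x y + sm y B + sm x A.
Proof.
rewrite /cut /sm big_setU1 //= sumCyA (msym y x); congr (_ + _).
by apply: eq_bigr => u uA; rewrite sumCyA inner0 // addn0 msym.
Qed.

Lemma degx : (forall v, m v v = 0) -> deg m x = sm x A + m x y + sm x B.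
Proof. by move=> d; rewrite /deg sumT sumCA d /sm; lia. Qed.

Lemma degy : (forall v, m v v = 0) -> deg m y = sm y A + m x y + sm y B.
Proof. by move=> d; rewrite /deg sumT sumCA d (msym y x) /sm; lia. Qed.
End Split.

Lemma connect_step (T : finType) (e : rel T) p q :
  connect e p q -> p != q -> exists v, e p v.
Proof.
move=> /connectP [[|v s] /= pth ->]; first by rewrite eqxx.
by case/andP: pth => epv _ _; exists v.
Qed.

Lemma nb_pos (V : finType) (m : V -> V -> nat) (z p q w : V) :
  connected_on m (~: [set z]) -> p != q -> p != z -> q != z -> m p p = 0 ->
  m p q = 0 -> (forall v, [|| v == p, v == q, v == z | v == w]) -> 0 < m p w.
Proof.
move=> con pq pz qz mpp mpq cov.
have := con p q; rewrite !in_setC !in_set1 pz qz => /(_ isT isT) /connect_step /(_ pq) [v].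
rewrite /restr /adj !in_setC !in_set1 => /and3P [_ vz mpv].
by case/or4P: (cov v) => /eqP hv; subst v; rewrite ?mpp ?mpq ?eqxx in mpv vz *.
Qed.

Theorem lemma2p5 (r : nat) (V : finType) (m : V -> V -> nat) :
  3 <= r -> multigraph m -> r_graph r m -> two_connected m ->
  (exists x y : V, two_vertex_cut m x y) ->
  (exists X : {set V}, nontrivial_tight_cut r m X) \/ simple_C4 m.
Proof.
move=> r3 [msym mdiag] [hdeg hcut] [V3 conT con1] [x [y [xy hnc]]].
set S' := ~: [set x; y] in hnc *.
have evV : ~~ odd #|V|.
  apply/negP => oV; have := hcut setT; rewrite cardsT => /(_ oV).
  have -> : cut m setT = 0.
    by rewrite /cut setCT; apply: big1 => u _; rewrite big_set0.
  lia.
have h2 : 1 < ncomp m S'.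
  have : 0 < ncomp m setT.
    by rewrite /ncomp; apply/card_gt0P; exists [set z in setT | connect (restr m setT) x z]; apply/imsetP; exists x.
  lia.
have rsym : symmetric (restr m S').
  move=> u v; rewrite /restr /adj (msym u v).
  by case: (u \in S'); case: (v \in S').
have csym := sym_connect_sym rsym.
case/card_gt1P: h2 => C1 [C2 [/imsetP [a aS -> ] /imsetP [b bS ->] neq]].
have nab : ~~ connect (restr m S') a b.
  apply: contra neq => cab; apply/eqP/setP => z.
  by rewrite !inE (same_connect csym cab).
set A := [set z in S' | connect (restr m S') a z].
have xA : x \notin A by rewrite !inE eqxx.
have yA : y \notin A by rewrite !inE eqxx orbT.
have aA : a \in A by rewrite inE aS connect0.
move: bS; rewrite !inE => /norP [bnx bny].
have bB : b \in ~: (x |: (y |: A)).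
  by rewrite !(in_setC, in_setU1) (negbTE bnx) (negbTE bny) /A inE (negbTE nab) andbF.
have noedge : forall u v, u \in A -> v \in ~: (x |: (y |: A)) -> m u v = 0.
  move=> u v uA; rewrite in_setC !in_setU1 => /norP [vnx /norP [vny vnA]].
  apply/eqP; rewrite eqn0Ngt; apply/negP => muv.
  have vS : v \in S' by rewrite in_setC in_set2 negb_or vnx vny.
  move: uA; rewrite /A inE => /andP [uS cau].
  apply: (negP vnA); rewrite /A inE vS /=; apply: connect_trans cau (connect1 _).
  by rewrite /restr uS vS /adj muv.
set B := ~: (x |: (y |: A)) in bB noedge.
have hBA : ~: (x |: (y |: B)) = A.
  apply/setP => v; rewrite /B !(in_setC, in_setU1).
  have [->|vx] := eqVneq v x; first by rewrite ?eqxx /= (negbTE xA).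
  have [->|vy] := eqVneq v y; first by rewrite ?eqxx ?orbT /= (negbTE yA).
  by rewrite /= negbK.
have noedgeB : forall u v, u \in B -> v \in ~: (x |: (y |: B)) -> m u v = 0.
  by move=> u v uB; rewrite hBA => vA; rewrite msym; apply: noedge.
have xB : x \notin B by rewrite !(in_setC, in_setU1) eqxx.
have yB : y \notin B by rewrite !(in_setC, in_setU1) eqxx orbT.
have cA := cutA msym xy xA yA noedge.
have cB := cutA msym xy xB yB noedgeB.
have cxA := cutxA msym xy xA yA noedge.
have cyA := cutyA msym xy xA yA noedge.
have dx := degx xy xA yA mdiag.
have dy := degy msym xy xA yA mdiag.
rewrite -/B in cxA cyA dx dy.
have rx := hdeg x; have ry := hdeg y.
have hcV : #|A| + 2 + #|B| = #|V|.
  have := cardsC (x |: (y |: A)); rewrite !cardsU1 in_setU1 (negbTE xy) (negbTE xA) yA /= -/B.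
  by move=> H; clear -H; lia.
have hcB := cardsC B; have hcA := cardsC A.
have hcxA := cardsC (x |: A); rewrite cardsU1 xA in hcxA.
have A0 : 0 < #|A| by apply/card_gt0P; exists a.
have B0 : 0 < #|B| by apply/card_gt0P; exists b.
have hpar : odd #|A| = odd #|B|.
  move: evV; rewrite -hcV !oddD /=.
  by case: (odd #|A|); case: (odd #|B|).
case oA : (odd #|A|).
  have oB : odd #|B| by rewrite -hpar.
  have := hcut A oA; have := hcut B oB => hB hA.
  have mxy0 : m x y = 0 by clear -hA hB cA cB dx dy rx ry; lia.
  case: (ltnP 1 #|A|) => hA1.
    by left; exists A; split => //; clear -hA hB cA cB dx dy rx ry hA1 hcA hcV; lia.
  case: (ltnP 1 #|B|) => hB1.
    by left; exists B; split => //; clear -hA hB cA cB dx dy rx ry hB1 hcB hcV; lia.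
  right.
  have Aeq : [set a] = A by apply/eqP; rewrite eqEcard sub1set aA cards1 hA1.
  have Beq : [set b] = B by apply/eqP; rewrite eqEcard sub1set bB cards1 hB1.
  have cover : forall v, [|| v == a, v == x, v == b | v == y].
    move=> v; case vB : (v \in B).
      by move: vB; rewrite -Beq in_set1 => ->; rewrite !orbT.
    move: vB; rewrite /B in_setC in_setU1 in_setU1 -Aeq in_set1.
    by move/negbFE; case/or3P => ->; rewrite ?orbT.
  have ab : a != b by apply: contraNneq nab => <-; exact: connect0.
  have ax : a != x by apply: contraNneq xA => <-.
  have ay : a != y by apply: contraNneq yA => <-.
  have ba : b != a by rewrite eq_sym.
  have mab : m a b = 0 by apply: noedge.
  have mba : m b a = 0 by rewrite msym.
  have pax : 0 < m a x.
    apply: (nb_pos (con1 y) ab ay bny (mdiag a) mab).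
    by move=> v; case/or4P: (cover v) => ->; rewrite ?orbT.
  have pay : 0 < m a y.
    apply: (nb_pos (con1 x) ab ax bnx (mdiag a) mab).
    by move=> v; case/or4P: (cover v) => ->; rewrite ?orbT.
  have pbx : 0 < m b x.
    apply: (nb_pos (con1 y) ba bny ay (mdiag b) mba).
    by move=> v; case/or4P: (cover v) => ->; rewrite ?orbT.
  have pby : 0 < m b y.
    apply: (nb_pos (con1 x) ba bnx ax (mdiag b) mba).
    by move=> v; case/or4P: (cover v) => ->; rewrite ?orbT.
  have pxa : 0 < m x a by rewrite msym.
  have pya : 0 < m y a by rewrite msym.
  have pxb : 0 < m x b by rewrite msym.
  have pyb : 0 < m y b by rewrite msym.
  have myx0 : m y x = 0 by rewrite msym.
  have e1 := negbTE ab; have e2 := negbTE ax; have e3 := negbTE ay.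
  have e4 := negbTE bnx; have e5 := negbTE bny; have e6 := negbTE xy.
  have f1 := negbTE ba.
  have f2 : (x == a) = false by rewrite eq_sym.
  have f3 : (y == a) = false by rewrite eq_sym.
  have f4 : (x == b) = false by rewrite eq_sym.
  have f5 : (y == b) = false by rewrite eq_sym.
  have f6 : (y == x) = false by rewrite eq_sym.
  exists a, x, b, y; split.
  - by rewrite /= !inE ?e1 ?e2 ?e3 ?e4 ?e5 ?e6 ?f1 ?f2 ?f3 ?f4 ?f5 ?f6.
  - by move=> v; rewrite !inE; exact: cover.
  move=> u v; case/or4P: (cover u) => /eqP ->; case/or4P: (cover v) => /eqP ->;
    rewrite /adj !inE ?xpair_eqE ?eqxx ?e1 ?e2 ?e3 ?e4 ?e5 ?e6 ?f1 ?f2 ?f3 ?f4 ?f5 ?f6 /=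
      ?mdiag ?mab ?mba ?mxy0 ?myx0 ?pax ?pay ?pbx ?pby ?pxa ?pya ?pxb ?pyb //.
left; exists (x |: A).
have oxA : odd #|x |: A| by rewrite cardsU1 xA /= oA.
have oyA : odd #|y |: A| by rewrite cardsU1 yA /= oA.
have := hcut _ oxA; have := hcut _ oyA => h1 h2.
have hA1 : #|A| != 1 by apply: contraFneq oA => ->.
split => //; rewrite ?cardsU1 ?xA /=; clear -h1 h2 cxA cyA dx dy rx ry hA1 A0 B0 hcxA hcV; lia.
Qed.
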